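(* Let $H \in \mathcal{M}_n(\mathbb{R})$ be a real symmetric matrix whose largest eigenvalue (spectral radius) is simple. Then $H$ has exactly $k$ distinct eigenvalues, where $2 \le k \le n$, if and only if there are $k$ distinct real numbers $\lambda_1, \lambda_2, \ldots, \lambda_k$ such that (i) $H - \lambda_i I$ is a singular matrix for every $2 \le i \le k$; and (ii) $\prod_{i=2}^{k}(H - \lambda_i I) = b\,\mathbf{y}\mathbf{y}^T$, where $b$ is a positive real number, $\mathbf{y} \in \mathbb{R}^n\setminus\{\mathbf{0}\}$ and $H\mathbf{y} = \lambda_1\mathbf{y}$. Moreover, in this case $\lambda_1, \ldots, \lambda_k$ are exactly the $k$ distinct eigenvalues of $H$.
   Context: $\mathcal{M}_n(\mathbb{R})$ is the set of $n\times n$ real matrices and $I$ the identity matrix. The spectral radius here means the largest eigenvalue; it is simple if its algebraic multiplicity is $1$. *)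

(* Defs.v *)
From mathcomp Require Import all_boot all_order all_algebra.
From mathcomp Require Import reals.
Set Implicit Arguments. Unset Strict Implicit. Unset Printing Implicit Defensive.
Import Order.TTheory GRing.Theory Num.Theory.
Local Open Scope ring_scope.

Definition symmetric_mx (R : realType) (n : nat) (H : 'M[R]_n) : Prop := H^T = H.

Definition largest_eigenvalue_simple (R : realType) (n : nat) (H : 'M[R]_n) : Prop :=
  exists l : R, eigenvalue H l /\ (forall m : R, eigenvalue H m -> m <= l)
                /\ mup l (char_poly H) = 1%N.

Definition num_distinct_eigenvalues (R : realType) (n : nat) (H : 'M[R]_n) (k : nat) : Prop :=
  exists s : seq R, [/\ uniq s, size s = k & forall a : R, eigenvalue H a <-> a \in s].

(* Conditions (i) and (ii) for the reals lam 0, ..., lam (k-1) (0-indexed: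
   lam 0 is lambda_1, lam i is lambda_(i+1)). *)
Definition cor27_conditions (R : realType) (n k : nat) (H : 'M[R]_n) (lam : nat -> R) : Prop :=
  [/\
      (forall i j : nat, (i < k)%N -> (j < k)%N -> lam i = lam j -> i = j),
      (forall i : nat, (1 <= i < k)%N -> (H - (lam i)%:M) \notin unitmx) &
      (exists (b : R) (y : 'cV[R]_n),
        [/\ 0 < b, y != 0, H *m y = lam 0%N *: y &
            \prod_(1 <= i < k) (H - (lam i)%:M) = b *: (y *m y^T)])].

(* Main.v *)
Require Import Defs.
From mathcomp Require Import all_boot all_order all_algebra.
From mathcomp Require Import reals complex.
Set Implicit Arguments. Unset Strict Implicit. Unset Printing Implicit Defensive.
Import Order.TTheory GRing.Theory Num.Theory.
Local Open Scope ring_scope.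

Lemma shift_big (T : Type) (idx : T) (op : T -> T -> T) (R : realType) (F : R -> T) (l : R) (r : seq R) :
  \big[op/idx]_(1 <= i < (size r).+1) F (nth 0 (l :: r) i) = \big[op/idx]_(x <- r) F x.
Proof. by rewrite big_add1 /= [RHS](big_nth 0). Qed.

Section S.
Variable R : realType.
Local Notation C := (R[i]).
Local Notation emb := (real_complex R).

Lemma realdiag n (H : 'M[R]_n) : H^T = H ->
  exists Q (d : 'rV[R]_n), Q \in unitmx /\ Q *m H = diag_mx d *m Q.
Proof.
move=> Hsym.
pose Hc := map_mx emb H.
have Hreal : Hc \is a realmx.
  by apply/mxOverP => i j; rewrite mxE; apply/complex_realP; exists (H i j).
have Hcsym : Hc \is symmetricmx.
  apply/is_hermitianmxP; rewrite expr0 scale1r; apply/matrixP => i j.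
  by rewrite !mxE -{1}Hsym mxE.
have herm := realsym_hermsym Hcsym Hreal.
have /orthomx_spectralP E := hermitian_normalmx herm.
have sreal := hermitian_spectral_diag_real herm.
set P := spectralmx Hc in E; set sp := spectral_diag Hc in E sreal.
have Pu : P \in unitmx by apply: spectral_unit.
have sim : similar_in unitmx Hc (diag_mx sp).
  exists P => //; apply/similarP => //.
  by rewrite {1}E !mulmxA mulmxV // mul1mx.
have Dreal : diag_mx sp \is a realmx by apply: mxOver_diag => //; rewrite real0.
have [Q /andP[Qr Qu] /(similarP Qu) QE] := real_similar sim Hreal Dreal.
pose Qr' := map_mx (@complex.Re R) Q.
have QQ : Q = map_mx emb Qr'.
  by apply/matrixP => i j; rewrite !mxE RRe_real //; move/mxOverP: Qr; apply.
pose d := map_mx (@complex.Re R) sp.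
have dd : sp = map_mx emb d.
  by apply/matrixP => i j; rewrite !mxE RRe_real //; move/mxOverP: sreal; apply.
exists Qr', d; split.
  by rewrite -(map_unitmx emb) -QQ.
apply: (map_mx_inj (f := emb)).
by rewrite !map_mxM -QQ map_diag_mx -dd.
Qed.
Lemma char_poly_sim n (H D Q : 'M[R]_n) : Q \in unitmx -> Q *m H = D *m Q ->
  char_poly H = char_poly D.
Proof.
move=> Qu QH.
have HE : H = invmx Q *m D *m Q by rewrite -mulmxA -QH mulKmx.
pose Qp := map_mx polyC Q; pose Qi := map_mx polyC (invmx Q).
have QiQp : Qi *m Qp = 1%:M by rewrite -map_mxM mulVmx // map_mx1.
have E : char_poly_mx H = Qi *m char_poly_mx D *m Qp.
  rewrite /char_poly_mx HE !map_mxM -/Qp -/Qi mulmxBr mulmxBl.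
  rewrite mul_mx_scalar -scalemxAl QiQp -mul_scalar_mx mulmx1.
  by [].
rewrite /char_poly E !det_mulmx mulrC mulrA -det_mulmx.
by rewrite [Qp *m Qi]mulmx1C // det1 mul1r.
Qed.

Lemma prod_mx_vec n (H : 'M[R]_n) (v : 'rV[R]_n) a I (r : seq I) (P : pred I) (f : I -> R) :
  v *m H = a *: v ->
  v *m \prod_(i <- r | P i) (H - (f i)%:M) = (\prod_(i <- r | P i) (a - f i)) *: v.
Proof.
move=> vH; elim/big_rec2: _ => [|i x M _ IH]; first by rewrite mulmx1 scale1r.
by rewrite -mulmxE mulmxA mulmxBr vH mul_mx_scalar -scalerBl -scalemxAl IH scalerA.
Qed.

Lemma prod_mx_sym n (H : 'M[R]_n) (r : seq R) : H^T = H ->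
  (\prod_(x <- r) (H - x%:M))^T = \prod_(x <- r) (H - x%:M) /\
  (\prod_(x <- r) (H - x%:M)) *m H = H *m \prod_(x <- r) (H - x%:M).
Proof.
move=> Hs; elim: r => [|x r [IH1 IH2]]; first by rewrite big_nil trmx1 mulmx1 mul1mx.
rewrite big_cons -mulmxE; set M := \prod_(_ <- _) _ in IH1 IH2 *.
have cM : (H - x%:M) *m M = M *m (H - x%:M).
  by rewrite mulmxBl mulmxBr IH2 scalar_mxC.
split; first by rewrite trmx_mul IH1 linearB /= Hs tr_scalar_mx cM.
by rewrite -mulmxA IH2 !mulmxA mulmxBl mulmxBr scalar_mxC.
Qed.


Lemma eig_notunit n (H : 'M[R]_n) a : eigenvalue H a = ((H - a%:M) \notin unitmx).
Proof. by rewrite /eigenvalue /eigenspace kermx_eq0 row_free_unit. Qed.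

Lemma moreover n k (H : 'M[R]_n) (lam : nat -> R) :
  H^T = H ->
  (forall i : nat, (1 <= i < k)%N -> (H - (lam i)%:M) \notin unitmx) ->
  (exists (b : R) (y : 'cV[R]_n),
        [/\ 0 < b, y != 0, H *m y = lam 0%N *: y &
            \prod_(1 <= i < k) (H - (lam i)%:M) = b *: (y *m y^T)]) ->
  (0 < k)%N ->
  forall a : R, eigenvalue H a <-> exists2 i : nat, (i < k)%N & lam i = a.
Proof.
move=> Hs Hi [b [y [b0 y0 Hy Pm]]] k0 a.
have yH : y^T *m H = lam 0%N *: y^T by rewrite -{1}Hs -trmx_mul Hy linearZ.
have yT0 : y^T != 0 by apply: contra y0 => /eqP/(congr1 trmx); rewrite trmxK trmx0 => ->.
split; last first.
  case=> i ik <-; case: i ik => [|i] ik.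
    by apply/eigenvalueP; exists y^T.
  by rewrite eig_notunit; apply: Hi; rewrite ik.
move=> /eigenvalueP [v vH v0].
have [/existsP [i /eqP li]|nex] := boolP [exists i : 'I_k, lam i == a].
  by exists i.
exfalso.
have c0 : \prod_(1 <= i < k) (a - lam i) != 0.
  rewrite prodf_seq_neq0; apply/allP => i; rewrite mem_index_iota => /andP[_ ik].
  rewrite /= subr_eq0; apply/eqP => ai; move/existsP: nex; apply.
  by exists (Ordinal ik); rewrite -ai.
have := prod_mx_vec (index_iota 1 k) (fun _ => true) lam vH.
rewrite Pm -scalemxAr mulmxA.
set al := (v *m y) 0 0.
have -> : v *m y = al%:M.
  apply/matrixP => i j; rewrite !ord1 [RHS]mxE eqxx mulr1n //.
rewrite mul_scalar_mx scalerA => vE.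
have vE' : v = ((\prod_(1 <= i < k) (a - lam i))^-1 * (b * al)) *: y^T.
  by rewrite -scalerA vE scalerA mulVf // scale1r.
have : v *m H = lam 0%N *: v by rewrite vE' -scalemxAl yH !scalerA mulrC.
rewrite vH => /eqP; rewrite -subr_eq0 -scalerBl scaler_eq0 (negPf v0) orbF subr_eq0.
move=> /eqP al0; move/existsP: nex; apply; exists (Ordinal k0); rewrite /= al0.
by [].
Qed.


Lemma forward n' k (H : 'M[R]_n'.+1) : H^T = H -> largest_eigenvalue_simple H ->
  num_distinct_eigenvalues H k -> exists lam, cor27_conditions k H lam.
Proof.
move=> Hs [l [leig [lmax lmup]]] [s [us ss seig]].
have [Q [d [Qu QH]]] := realdiag Hs.
pose ds := [seq d 0 j | j <- enum 'I_n'.+1].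
have charH : char_poly H = \prod_(x <- ds) ('X - x%:P).
  rewrite (char_poly_sim Qu QH) char_poly_trig ?diag_mx_is_trig // big_map big_enum /=.
  by apply: eq_bigr => j _; rewrite mxE eqxx mulr1n.
have eigds a : eigenvalue H a = (a \in ds).
  by rewrite eigenvalue_root_char charH root_prod_XsubC.
have cnt : count_mem l ds = 1%N by rewrite -mu_prod_XsubC -charH.
have ls : l \in s by apply/seig.
have [j0 _ dj0] : exists2 j0, j0 \in enum 'I_n'.+1 & l = d 0 j0.
  by apply/mapP; rewrite -eigds.
have uj0 : forall j, d 0 j = l -> j = j0.
  move=> j djl; apply/eqP/negPn/negP => jj0.
  move: cnt; rewrite count_map (permP (perm_to_rem (mem_enum _ j0))) /=.
  rewrite /preim /= -dj0 eqxx add1n => -[] /eqP.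
  rewrite -leqn0 leqNgt -has_count => /hasPn /(_ j).
  by rewrite (mem_rem_uniq _ (enum_uniq _)) !inE jj0 mem_enum djl eqxx => /(_ isT).
pose r := rem l s.
pose lam i := nth 0 (l :: r) i.
have ur : uniq (l :: r) by rewrite /= mem_rem_uniqF // rem_uniq.
have sizel : size (l :: r) = k by rewrite /= size_rem // ss prednK // -ss; case: (s) ls.
have mr x : (x \in r) = (x != l) && (x \in s) by rewrite (mem_rem_uniq _ us) inE.
have prod_eq (T : Type) (idx : T) (op : T -> T -> T) (F : R -> T) :
    \big[op/idx]_(1 <= i < k) F (lam i) = \big[op/idx]_(x <- r) F x.
  by rewrite -sizel shift_big.
exists lam; split.
- move=> i j ik jk /eqP; rewrite nth_uniq ?sizel // => /eqP //.
- move=> i /andP[i1 ik]; rewrite -eig_notunit; apply/seig.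
  case: i i1 ik => // i _ ik; rewrite /lam /=.
  apply: mem_rem (_ : _ \in r); apply: mem_nth.
  by move: ik; rewrite -sizel /= ltnS.
pose q := \prod_(x <- r) ('X - x%:P).
have Pq : \prod_(1 <= i < k) (H - (lam i)%:M) = horner_mx H q.
  rewrite (prod_eq _ _ _ (fun x => H - x%:M)) /q rmorph_prod; apply: eq_bigr => x _.
  by rewrite rmorphB /= horner_mx_X horner_mx_C.
have HE : H = invmx Q *m diag_mx d *m Q by rewrite -mulmxA -QH mulKmx.
have Pd : horner_mx H q = invmx Q *m diag_mx (map_mx (horner q) d) *m Q.
  by rewrite {1}HE horner_mx_uconjC ?horner_mx_diag.
pose be := q.[l].
have be0 : 0 < be.
  rewrite /be /q horner_prod big_seq; apply: prodr_gt0 => x xr.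
  rewrite hornerXsubC subr_gt0 lt_def; move: xr; rewrite mr => /andP[xl xs].
  by rewrite eq_sym xl lmax //; apply/seig.
have dq : map_mx (horner q) d = be *: delta_mx 0 j0.
  apply/matrixP => i j; rewrite !mxE ord1 eqxx /=.
  case: (eqVneq j j0) => [->|jj0]; first by rewrite -dj0 mulr1.
  rewrite mulr0; apply/rootP; rewrite /q root_prod_XsubC mr; apply/andP; split.
    by apply: contra jj0 => /eqP /uj0 ->.
  by apply/seig; rewrite eigds; apply: map_f; rewrite mem_enum.
have dd : diag_mx (be *: delta_mx 0 j0) = be *: (delta_mx j0 (0 : 'I_1) *m delta_mx (0 : 'I_1) j0 : 'M_n'.+1).
  rewrite mul_delta_mx; apply/matrixP => i j; rewrite !mxE eqxx /=.
  case: (eqVneq i j) => [<-|ij]; first by rewrite mulr1n andbb.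
  rewrite mulr0n; case: (eqVneq i j0) => [ei|ni]; last by rewrite mulr0.
  by rewrite -ei eq_sym (negPf ij) mulr0.

pose y := invmx Q *m delta_mx j0 (0 : 'I_1).
pose r0 := (delta_mx (0 : 'I_1) j0 *m Q).
have PE : horner_mx H q = be *: (y *m r0).
  by rewrite Pd dq dd -!scalemxAr -scalemxAl !mulmxA.
have ry : r0 *m y = 1%:M.
  rewrite /r0 /y mulmxA -(mulmxA _ Q) mulmxV // mulmx1 mul_delta_mx.
  by apply/matrixP => i j; rewrite !ord1 !mxE.
have y0 : y != 0.
  apply/eqP => y0; move: ry; rewrite y0 mulmx0 => /matrixP /(_ 0 0).
  by rewrite !mxE /= => /eqP; rewrite eq_sym oner_eq0.
have Hy : H *m y = l *: y.
  rewrite {1}HE /y !mulmxA -(mulmxA _ Q) mulmxV // mulmx1 -!mulmxA scalemxAr.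
  congr (_ *m _); rewrite mul_diag_mx; apply/matrixP => i j; rewrite !mxE ord1 eqxx andbT.
  by case: (eqVneq i j0) => [->|ij]; rewrite ?dj0 ?mulr0.
have Psym : (horner_mx H q)^T = horner_mx H q.
  by rewrite -Pq (prod_eq _ _ _ (fun x => H - x%:M)); exact: (prod_mx_sym r Hs).1.
have yr : y *m r0 = r0^T *m y^T.
  move: Psym; rewrite PE linearZ /= trmx_mul => /(scalerI (lt0r_neq0 be0)).
  by move=> ->.
pose ny := (y^T *m y) 0 0.
have yty : y^T *m y = ny%:M.
  by apply/matrixP => i j; rewrite !ord1 [RHS]mxE eqxx mulr1n.
have ny0 : 0 < ny.
  have /matrix0Pn [i [j yij]] := y0.
  rewrite ord1 in yij.
  have h1 : 0 < y i 0 * y i 0 by rewrite lt0r mulf_neq0 //= -expr2 sqr_ge0.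
  rewrite /ny mxE (bigD1 i) //= mxE; apply: (lt_le_trans h1); rewrite lerDl.
  by apply: sumr_ge0 => t _; rewrite mxE -expr2 sqr_ge0.
have r0E : r0 = ny^-1 *: y^T.
  have yE : y = ny *: r0^T.
    by rewrite -[y in LHS]mulmx1 -ry mulmxA yr -mulmxA yty mul_mx_scalar.
  rewrite -[r0]trmxK yE linearZ /= trmxK scalerA mulVf ?scale1r //.
  exact: lt0r_neq0.
exists (be / ny), y; split => //.
  by rewrite divr_gt0.
by rewrite Pq PE r0E -scalemxAr scalerA.
Qed.
End S.

Unset Implicit Arguments.

Theorem corollary2p7 (R : realType) (n k : nat) (H : 'M[R]_n) :
  symmetric_mx H -> largest_eigenvalue_simple H -> (2 <= k <= n)%N ->
  (num_distinct_eigenvalues H k <-> exists lam : nat -> R, cor27_conditions k H lam) /\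
  (forall lam : nat -> R, cor27_conditions k H lam ->
     forall a : R, eigenvalue H a <-> exists2 i : nat, (i < k)%N & lam i = a).
Proof.
move=> Hs Hl /andP[k2 kn].
have k0 : (0 < k)%N by apply: leq_trans k2.
have more : forall lam, cor27_conditions k H lam ->
    forall a, eigenvalue H a <-> exists2 i, (i < k)%N & lam i = a.
  by move=> lam [_ Hi Hii]; exact: moreover Hs Hi Hii k0.
split=> //; split.
  clear more; case: n H Hs Hl kn => [|n'] H Hs Hl kn.
    by move: kn; rewrite leqn0 => /eqP k00; rewrite k00 in k2.
  exact: forward.
move=> [lam Hlam]; exists [seq lam i | i <- iota 0 k]; split.
- rewrite map_inj_in_uniq ?iota_uniq // => i j; rewrite !mem_iota !add0n => ik jk.
  by case: Hlam => inj _ _; exact: inj.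
- by rewrite size_map size_iota.
- move=> a; rewrite (more _ Hlam); split.
    by move=> [i ik <-]; apply: map_f; rewrite mem_iota.
  by case/mapP => i; rewrite mem_iota add0n => ik ->; exists i.
Qed.
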